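(* Let $S=\{(X_m,y_m)\}_{m=1}^T\in\mathcal{S}_T$ with $\operatorname{rank}(X_m)=d-1$ for all $m$, and let $v_m$ be a unit vector spanning $\ker X_m$. Let $\tau$ be any ordering and $k\ge2$. For $i,j\in\{1,\dots,k\}$ let $\theta_{i,j}\in[0,\pi/2]$ satisfy $\cos^2\theta_{i,j}=(v_{\tau(i)}^\top v_{\tau(j)})^2$. Then $$F_{\tau,S}(k)\ge\min_{m}\sigma_{\min}^2(X_m)\,(v_{\tau(1)}^\top w^\star)^2\,\frac1k\Big(\prod_{i=1}^{k-1}\cos^2\theta_{i,i+1}\Big)\sum_{j=1}^{k-1}\big(1-\cos^2\theta_{j,k}\big),$$ where $\sigma_{\min}(X_m)$ is the smallest non-zero singular value of $X_m$.
   Context: Let $d\ge 1$, $T\ge1$. A task is a pair $(X_m,y_m)$ with $X_m\in\mathbb{R}^{n_m\times d}$, $y_m\in\mathbb{R}^{n_m}$ and $\operatorname{rank}(X_m)<d$. $\mathcal{S}_T$ denotes the set of collections $S=\{(X_m,y_m)\}_{m=1}^T$ of $T$ tasks such that $\|X_m\|\le 1$ (spectral norm) for all $m$ and there exists $w\in\mathbb{R}^d$ with $\|w\|\le 1$ and $y_m=X_mw$ for all $m$. Given $S$ and an ordering $\tau:\mathbb{N}^+\to\{1,\dots,T\}$, the iterates are $w_0=0$ and $w_t=w_{t-1}+X_{\tau(t)}^+(y_{\tau(t)}-X_{\tau(t)}w_{t-1})$, with $A^+$ the Moore–Penrose pseudoinverse. The forgetting at iteration $k$ is $F_{\tau,S}(k)=\frac1k\sum_{t=1}^k\|X_{\tau(t)}w_k-y_{\tau(t)}\|^2$.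 $w^\star$ denotes the minimum Euclidean-norm vector with $X_mw^\star=y_m$ for all $m$. *)

(* Defs.v *)
From HB Require Import structures.
From mathcomp Require Import all_boot all_order all_algebra.
From mathcomp Require Import all_classical all_reals.
Set Implicit Arguments. Unset Strict Implicit. Unset Printing Implicit Defensive.
Import Order.TTheory GRing.Theory Num.Theory.
Local Open Scope ring_scope.
Local Open Scope classical_set_scope.

Section Defs.
Variable R : realType.

Definition dotv (d : nat) (u v : 'cV[R]_d) : R := \sum_(i < d) u i 0 * v i 0.
Definition nrm2 (d : nat) (u : 'cV[R]_d) : R := dotv u u.

Definition spec_le1 (n d : nat) (A : 'M[R]_(n, d)) : Prop :=
  forall u : 'cV[R]_d, nrm2 (A *m u) <= nrm2 u.

(* P is the Moore-Penrose pseudoinverse of A (the four Penrose equations;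
   such a P exists and is unique) *)
Definition is_pinv (n d : nat) (A : 'M[R]_(n, d)) (P : 'M[R]_(d, n)) : Prop :=
  [/\ A *m P *m A = A, P *m A *m P = P,
      (A *m P)^T = A *m P & (P *m A)^T = P *m A].

(* Smallest non-zero singular value of A: infimum of the positive s such that
   s^2 is an eigenvalue of A^T A *)
Definition sigma_min (n d : nat) (A : 'M[R]_(n, d)) : R :=
  inf [set s : R | 0 < s /\ eigenvalue (A^T *m A) (s ^+ 2)].

Fixpoint iterate (T d : nat) (n : 'I_T -> nat)
    (X : forall m, 'M[R]_(n m, d)) (y : forall m, 'cV[R]_(n m))
    (Xp : forall m, 'M[R]_(d, n m)) (tau : nat -> 'I_T) (t : nat) : 'cV[R]_d :=
  match t with
  | 0 => 0
  | t'.+1 =>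
      let w := iterate X y Xp tau t' in
      w + Xp (tau t) *m (y (tau t) - X (tau t) *m w)
  end.

Definition forgetting (T d : nat) (n : 'I_T -> nat)
    (X : forall m, 'M[R]_(n m, d)) (y : forall m, 'cV[R]_(n m))
    (Xp : forall m, 'M[R]_(d, n m)) (tau : nat -> 'I_T) (k : nat) : R :=
  k%:R^-1 * \sum_(1 <= t < k.+1)
      nrm2 (X (tau t) *m iterate X y Xp tau k - y (tau t)).

Definition in_ST (T d : nat) (n : 'I_T -> nat)
    (X : forall m, 'M[R]_(n m, d)) (y : forall m, 'cV[R]_(n m)) : Prop :=
  (forall m, (\rank (X m) < d)%N) /\ (forall m, spec_le1 (X m)) /\
  exists w : 'cV[R]_d, nrm2 w <= 1 /\ forall m, y m = X m *m w.

Definition is_min_norm_sol (T d : nat) (n : 'I_T -> nat)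
    (X : forall m, 'M[R]_(n m, d)) (y : forall m, 'cV[R]_(n m)) (w : 'cV[R]_d) : Prop :=
  (forall m, X m *m w = y m) /\
  forall w' : 'cV[R]_d, (forall m, X m *m w' = y m) -> nrm2 w <= nrm2 w'.

End Defs.

(* Main.v *)
Require Import Defs.
From HB Require Import structures.
From mathcomp Require Import all_boot all_order all_algebra.
From mathcomp Require Import all_classical all_reals all_analysis.
From mathcomp Require Import ring lra.
Import Order.TTheory GRing.Theory Num.Theory numFieldNormedType.Exports.
Local Open Scope ring_scope.
Local Open Scope classical_set_scope.

Section Aux.
Variable R : realType.
Implicit Types (d : nat).

Lemma dotvE d (u w : 'cV[R]_d) : dotv u w = (u^T *m w) 0 0.
Proof. by rewrite /dotv !mxE; apply: eq_bigr => i _; rewrite !mxE. Qed.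

Lemma dotvC d (u w : 'cV[R]_d) : dotv u w = dotv w u.
Proof. by rewrite /dotv; apply: eq_bigr => i _; rewrite mulrC. Qed.

Lemma dotvDl d (u u' w : 'cV[R]_d) : dotv (u + u') w = dotv u w + dotv u' w.
Proof. by rewrite /dotv -big_split; apply: eq_bigr => i _; rewrite !mxE mulrDl. Qed.

Lemma dotvZl d a (u w : 'cV[R]_d) : dotv (a *: u) w = a * dotv u w.
Proof. by rewrite /dotv mulr_sumr; apply: eq_bigr => i _; rewrite !mxE mulrA. Qed.

Lemma dotvNl d (u w : 'cV[R]_d) : dotv (- u) w = - dotv u w.
Proof. by rewrite -scaleN1r dotvZl mulN1r. Qed.

Lemma dotvBl d (u u' w : 'cV[R]_d) : dotv (u - u') w = dotv u w - dotv u' w.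
Proof. by rewrite dotvDl dotvNl. Qed.

Lemma dotvDr d (u u' w : 'cV[R]_d) : dotv w (u + u') = dotv w u + dotv w u'.
Proof. by rewrite !(dotvC _ w) dotvDl. Qed.

Lemma dotvZr d a (u w : 'cV[R]_d) : dotv w (a *: u) = a * dotv w u.
Proof. by rewrite !(dotvC _ w) dotvZl. Qed.

Lemma dotvBr d (u u' w : 'cV[R]_d) : dotv w (u - u') = dotv w u - dotv w u'.
Proof. by rewrite !(dotvC _ w) dotvBl. Qed.

Lemma dotv0l d (w : 'cV[R]_d) : dotv 0 w = 0.
Proof. by rewrite /dotv big1 // => i _; rewrite mxE mul0r. Qed.

Lemma dotv0r d (w : 'cV[R]_d) : dotv w 0 = 0.
Proof. by rewrite dotvC dotv0l. Qed.

Lemma dotv_tr n d (A : 'M[R]_(n, d)) (u : 'cV[R]_n) (w : 'cV[R]_d) :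
  dotv (A^T *m u) w = dotv u (A *m w).
Proof. by rewrite !dotvE trmx_mul trmxK mulmxA. Qed.

Lemma nrm2_ge0 d (u : 'cV[R]_d) : 0 <= nrm2 u.
Proof. by rewrite /nrm2 /dotv sumr_ge0 // => i _; rewrite -expr2 sqr_ge0. Qed.

Lemma nrm2_eq0 d (u : 'cV[R]_d) : nrm2 u = 0 -> u = 0.
Proof.
move=> /eqP; rewrite /nrm2 /dotv psumr_eq0; last by move=> i _; rewrite -expr2 sqr_ge0.
move=> /allP H; apply/matrixP => i j; rewrite (ord1 j) mxE.
by have := H i (mem_index_enum _); rewrite -expr2 sqrf_eq0 => /eqP.
Qed.

Lemma nrm2Z d a (u : 'cV[R]_d) : nrm2 (a *: u) = a ^+ 2 * nrm2 u.
Proof. by rewrite /nrm2 dotvZl dotvZr mulrA expr2. Qed.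

Lemma nrm2D d (u w : 'cV[R]_d) :
  nrm2 (u + w) = nrm2 u + 2 * dotv u w + nrm2 w.
Proof. rewrite /nrm2 dotvDl !dotvDr (dotvC _ w u); ring. Qed.

Lemma coord_sq_le d (u : 'cV[R]_d) i : u i 0 ^+ 2 <= nrm2 u.
Proof.
rewrite /nrm2 /dotv (bigD1 i) //= -expr2 lerDl sumr_ge0 // => j _.
by rewrite -expr2 sqr_ge0.
Qed.


Lemma sum_cont d p (F : 'I_p -> 'rV[R]_d -> R) :
  (forall j, continuous (F j)) -> continuous (fun r => \sum_j F j r).
Proof.
elim: p F => [|p IH] F HF.
  have -> : (fun r => \sum_(j < 0) F j r) = (fun=> 0) by apply: funext => r; rewrite big_ord0.
  exact: cst_continuous.
have -> : (fun r => \sum_(j < p.+1) F j r) =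
   (fun r => \sum_(j < p) F (widen_ord (leqnSn p) j) r + F ord_max r).
  by apply: funext => r; rewrite big_ord_recr.
move=> x; apply: continuousD; last exact: HF.
by apply: (IH (fun j => F (widen_ord (leqnSn p) j))) => j; exact: HF.
Qed.

Lemma lin_cont d (a : 'I_d -> R) : continuous (fun r : 'rV[R]_d => \sum_j a j * r 0 j).
Proof.
apply: sum_cont => j x; apply: continuousM; first exact: cst_continuous.
exact: coord_continuous.
Qed.

Lemma quad_cont n d (X : 'M[R]_(n, d)) : continuous (fun r : 'rV[R]_d => nrm2 (X *m r^T)).
Proof.
have -> : (fun r : 'rV[R]_d => nrm2 (X *m r^T)) =
  (fun r => \sum_i ((\sum_j X i j * r 0 j) * (\sum_j X i j * r 0 j))).
  apply: funext => r; rewrite /nrm2 /dotv; apply: eq_bigr => i _.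
  by rewrite !mxE; congr (_ * _); apply: eq_bigr => j _; rewrite !mxE.
apply: sum_cont => i x; apply: continuousM; exact: lin_cont.
Qed.

Lemma dot_cont d (v : 'cV[R]_d) : continuous (fun r : 'rV[R]_d => dotv v r^T).
Proof.
have -> : (fun r : 'rV[R]_d => dotv v r^T) = (fun r => \sum_j v j 0 * r 0 j).
  by apply: funext => r; rewrite /dotv; apply: eq_bigr => j _; rewrite !mxE.
exact: lin_cont.
Qed.

Lemma nrm2_cont d : continuous (fun r : 'rV[R]_d => nrm2 r^T).
Proof.
have -> : (fun r : 'rV[R]_d => nrm2 r^T) = (fun r => nrm2 (1%:M *m r^T)).
  by apply: funext => r; rewrite mul1mx.
exact: quad_cont.
Qed.

Lemma K_compact d (v : 'cV[R]_d) :
  compact [set r : 'rV[R]_d | nrm2 r^T = 1 /\ dotv v r^T = 0].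
Proof.
have -> : [set r : 'rV[R]_d | nrm2 r^T = 1 /\ dotv v r^T = 0] =
  (fun r : 'rV[R]_d => nrm2 r^T) @^-1` [set 1] `&` (fun r => dotv v r^T) @^-1` [set 0].
  by apply/seteqP; split => r.
apply: compact_closedI; last first.
  apply: preimage_closed; first by move=> x _; exact: dot_cont.
  exact: closed_eq.
apply: bounded_closed_compact; last first.
  apply: preimage_closed; first by move=> x _; exact: nrm2_cont.
  exact: closed_eq.
rewrite /= /bounded_near; near=> M => r /= Hr.
rewrite [X in X <= _]/Num.norm /= mx_normrE; apply/bigmax_leP; split.
  by near: M; apply: nbhs_pinfty_ge; rewrite num_real.
move=> [i j] _ /=; apply: (@le_trans _ _ 1); last first.
  by near: M; apply: nbhs_pinfty_ge; rewrite num_real.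
rewrite (ord1 i).
have := coord_sq_le _ (r^T) j; rewrite Hr mxE.
move=> H; rewrite -(ler_pXn2r (n:=2)) ?nnegrE ?normr_ge0 // expr1n real_normK ?num_real //.
Unshelve. all: by end_near.
Qed.


Lemma sigma_min_ge0 n d (X : 'M[R]_(n, d)) : 0 <= sigma_min X.
Proof.
rewrite /sigma_min; set S := [set s | _].
case: (pselect (S !=set0)) => [ne|ne].
  by apply: lb_le_inf => // s [/ltW].
have -> : S = set0.
  by apply/seteqP; split=> s // Hs; exfalso; apply: ne; exists s.
by rewrite inf0.
Qed.

Lemma sigma_min_le n d (X : 'M[R]_(n, d)) s :
  0 < s -> eigenvalue (X^T *m X) (s ^+ 2) -> sigma_min X <= s.
Proof.
move=> s0 es; rewrite /sigma_min; set S := [set s | _].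
have hl : has_lbound S by exists 0 => x [/ltW].
exact: (@ge_inf R S hl s (conj s0 es)).
Qed.

Lemma rayleigh n d (X : 'M[R]_(n, d)) (v : 'cV[R]_d) :
  nrm2 v = 1 -> X *m v = 0 ->
  (forall u, X *m u = 0 -> exists c : R, u = c *: v) ->
  forall u, dotv v u = 0 -> sigma_min X ^+ 2 * nrm2 u <= nrm2 (X *m u).
Proof.
move=> nv Xv kerX u vu.
have [->|u0] := eqVneq u 0.
  by rewrite /nrm2 dotv0l mulr0 mulmx0 dotv0l.
set K := [set r : 'rV[R]_d | nrm2 r^T = 1 /\ dotv v r^T = 0].
have nu : 0 < nrm2 u.
  rewrite lt_neqAle nrm2_ge0 andbT eq_sym; apply/eqP => /nrm2_eq0 H.
  by rewrite H eqxx in u0.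
have Kne : K !=set0.
  exists ((Num.sqrt (nrm2 u))^-1 *: u)^T; rewrite /K /= trmxK; split.
    by rewrite nrm2Z exprVn sqr_sqrtr ?nrm2_ge0 // mulVf // gt_eqF.
  by rewrite dotvZr vu mulr0.
have [c0 c0K minc] := EVT_min_rV Kne (K_compact _ v)
   (continuous_subspaceT (quad_cont _ _ X)).
move: c0K; rewrite inE => -[nc vc].
set c := c0^T in nc vc.
set lam := nrm2 (X *m c).
have minc' : forall w, dotv v w = 0 -> lam * nrm2 w <= nrm2 (X *m w).
  move=> w vw.
  have [->|w0] := eqVneq w 0.
    by rewrite /nrm2 dotv0l mulr0 mulmx0 dotv0l.
  have nw : 0 < nrm2 w.
    rewrite lt_neqAle nrm2_ge0 andbT eq_sym; apply/eqP => /nrm2_eq0 H.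
    by rewrite H eqxx in w0.
  set s := Num.sqrt (nrm2 w).
  have s0 : 0 < s by rewrite sqrtr_gt0.
  have := minc ((s^-1 *: w)^T); rewrite inE trmxK => /(_ (conj _ _)).
  rewrite -/c -/lam -scalemxAr nrm2Z exprVn sqr_sqrtr ?nrm2_ge0 //.
  rewrite !trmxK nrm2Z dotvZr vw mulr0 exprVn sqr_sqrtr ?nrm2_ge0 //.
  rewrite mulVf ?gt_eqF // => /(_ erefl erefl) H.
  by rewrite -ler_pdivlMr // mulrC.
have lam0 : 0 <= lam := nrm2_ge0 _ _.
(* first-order condition *)
have foc : forall h, dotv v h = 0 ->
    dotv (X *m c) (X *m h) - lam * dotv c h = 0.
  move=> h vh.
  set b := dotv (X *m c) (X *m h) - lam * dotv c h.
  set q := nrm2 (X *m h) - lam * nrm2 h.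
  have q0 : 0 <= q by rewrite subr_ge0 minc'.
  set t := - b / (q + 1).
  have := minc' (c + t *: h).
  rewrite dotvDr dotvZr vh vc mulr0 addr0 => /(_ erefl).
  rewrite mulmxDr -scalemxAr !nrm2D !nrm2Z !dotvZr nc -/lam => H.
  have H2 : 0 <= t * (2 * b + t * q).
    rewrite /b /q; move: H; rewrite -subr_ge0 => H; apply: le_trans H _.
    by rewrite le_eqVlt; apply/orP; left; apply/eqP; ring.
  have tb : b = - (t * (q + 1)).
    have q1 : 0 < q + 1 by lra.
    by rewrite /t divfK ?opprK // gt_eqF.
  rewrite tb in H2.
  have : t = 0 by nra.
  by rewrite tb => ->; rewrite mul0r oppr0.
set z := X^T *m (X *m c) - lam *: c.
have zh : forall h, dotv v h = 0 -> dotv z h = 0.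
  by move=> h vh; rewrite dotvBl dotv_tr dotvZl foc.
have zv : dotv z v = 0.
  by rewrite dotvBl dotv_tr Xv dotv0r dotvZl dotvC vc mulr0 subr0.
have vv : dotv v v = 1 by [].
have z0 : z = 0.
  apply: nrm2_eq0.
  have := zh (z - dotv v z *: v).
  rewrite dotvBr dotvZr vv mulr1 subrr => /(_ erefl).
  by rewrite dotvBr dotvZr dotvC zv mulr0 subr0.
have lampos : 0 < lam.
  rewrite lt_neqAle lam0 andbT eq_sym; apply/eqP => /nrm2_eq0 /kerX [a ca].
  move: vc; rewrite ca dotvZr vv mulr1 => a0.
  by move: nc; rewrite ca a0 scale0r /nrm2 dotv0l => /eqP; rewrite eq_sym oner_eq0.
have eig : eigenvalue (X^T *m X) (Num.sqrt lam ^+ 2).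
  rewrite sqr_sqrtr //; apply/eigenvalueP; exists c0.
    move/eqP: z0; rewrite subr_eq0 => /eqP /(congr1 trmx).
    by rewrite trmx_mul trmxK linearZ /= /c trmxK trmx_mul trmxK mulmxA.
  apply/eqP => c00; move: nc; rewrite /c c00 trmx0 /nrm2 dotv0l => /esym /eqP.
  by rewrite oner_eq0.
have sp : 0 < Num.sqrt lam by rewrite sqrtr_gt0.
have sl := sigma_min_le _ _ X _ sp eig.
have sg := sigma_min_ge0 _ _ X.
have sq : Num.sqrt lam ^+ 2 = lam by rewrite sqr_sqrtr.
have s2 : sigma_min X ^+ 2 <= lam by nra.
apply: le_trans (minc' u vu).
by rewrite ler_wpM2r // nrm2_ge0.
Qed.



Lemma pinv_proj n d (X : 'M[R]_(n, d)) Xp (v : 'cV[R]_d) :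
  is_pinv X Xp -> nrm2 v = 1 -> X *m v = 0 ->
  (forall u, X *m u = 0 -> exists c : R, u = c *: v) ->
  forall u, Xp *m (X *m u) = u - dotv v u *: v.
Proof.
move=> [h1 _ _ h4] nv Xv kerX u.
have vv : dotv v v = 1 by [].
rewrite mulmxA.
have := kerX (u - Xp *m X *m u).
rewrite mulmxBr !mulmxA h1 subrr => /(_ erefl) [a ha].
have pv : dotv v (Xp *m X *m u) = 0.
  rewrite -h4 -dotv_tr trmxK -mulmxA Xv mulmx0.
  by rewrite dotv0l.
have : dotv v (u - Xp *m X *m u) = a by rewrite ha dotvZr vv mulr1.
rewrite dotvBr pv subr0 => av.
by rewrite av -ha opprB addrC subrK.
Qed.

End Aux.


Theorem mainTheorem10 (R : realType) (d T : nat) (n : 'I_T -> nat)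
    (X : forall m, 'M[R]_(n m, d)) (y : forall m, 'cV[R]_(n m))
    (Xp : forall m, 'M[R]_(d, n m)) (v : 'I_T -> 'cV[R]_d)
    (wstar : 'cV[R]_d) (tau : nat -> 'I_T) (k : nat) :
  (1 <= d)%N -> (1 <= T)%N ->
  in_ST X y ->
  (forall m, \rank (X m) = d.-1) ->
  (forall m, nrm2 (v m) = 1 /\ X m *m v m = 0 /\
     forall u : 'cV[R]_d, X m *m u = 0 -> exists c : R, u = c *: v m) ->
  (forall m, is_pinv (X m) (Xp m)) ->
  is_min_norm_sol X y wstar ->
  (2 <= k)%N ->
  inf [set sigma_min (X m) ^+ 2 | m in [set: 'I_T]]
    * (dotv (v (tau 1%N)) wstar) ^+ 2 * k%:R^-1
    * (\prod_(1 <= i < k) (dotv (v (tau i)) (v (tau i.+1))) ^+ 2)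
    * (\sum_(1 <= j < k) (1 - (dotv (v (tau j)) (v (tau k))) ^+ 2))
  <= forgetting X y Xp tau k.
Proof.
move=> _ _ _ _ hv hp [hw _] k2.
set w := iterate X y Xp tau.
have step : forall t, w t.+1 - wstar = dotv (v (tau t.+1)) (w t - wstar) *: v (tau t.+1).
  move=> t; rewrite /w /= -/w.
  have [nv [Xv kerX]] := hv (tau t.+1).
  rewrite -hw -mulmxBr (@pinv_proj _ _ _ _ _ _ (hp _) nv Xv kerX).
  have -> : dotv (v (tau t.+1)) (wstar - w t) = - dotv (v (tau t.+1)) (w t - wstar).
    by rewrite !dotvBr opprB.
  by apply/matrixP => i j; rewrite !mxE; ring.
have coef : forall k, (1 <= k)%N -> exists c, w k - wstar = c *: v (tau k) /\
   c ^+ 2 = dotv (v (tau 1%N)) wstar ^+ 2 *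
     \prod_(1 <= i < k) dotv (v (tau i)) (v (tau i.+1)) ^+ 2.
  elim => [//|[|t] IH] _.
    exists (- dotv (v (tau 1%N)) wstar); split.
      rewrite step /w /= sub0r; congr (_ *: _).
      by rewrite dotvC dotvNl dotvC.
    by rewrite big_geq // mulr1 sqrrN.
  have [c [ec c2]] := IH erefl.
  exists (dotv (v (tau t.+2)) (v (tau t.+1)) * c); split.
    by rewrite step ec dotvZr mulrC.
  rewrite exprMn c2 (@big_nat_recr _ _ _ t.+1 1%N) //= mulrA [in RHS]mulrC.
  by rewrite dotvC mulrA.
have [c [ec c2]] := coef k (ltnW k2).
set I := inf _.
have Ile : forall m, I <= sigma_min (X m) ^+ 2.
  move=> m; have hl : has_lbound [set sigma_min (X m) ^+ 2 | m in [set: 'I_T]].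
    by exists 0 => x [m' _ <-]; rewrite sqr_ge0.
  by apply: (ge_inf hl); exists m.
have term : forall t, I * (1 - dotv (v (tau t)) (v (tau k)) ^+ 2)
    <= nrm2 (X (tau t) *m (v (tau k))).
  move=> t; have [nv [Xv kerX]] := hv (tau t).
  have [nk _] := hv (tau k).
  set a := dotv (v (tau t)) (v (tau k)).
  have vv : dotv (v (tau t)) (v (tau t)) = 1 by [].
  have := @rayleigh _ _ _ _ _ nv Xv kerX (v (tau k) - a *: v (tau t)).
  rewrite dotvBr dotvZr vv mulr1 subrr => /(_ erefl).
  rewrite mulmxBr -scalemxAr Xv scaler0 subr0.
  have nu : nrm2 (v (tau k) - a *: v (tau t)) = 1 - a ^+ 2.
    rewrite -scaleNr nrm2D nrm2Z dotvZr nk nv dotvC -/a; ring.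
  have a1 : 0 <= 1 - a ^+ 2 by rewrite -nu nrm2_ge0.
  rewrite nu; apply: le_trans; rewrite ler_wpM2r // ?Ile //.
have each : forall t, nrm2 (X (tau t) *m w k - y (tau t))
    = c ^+ 2 * nrm2 (X (tau t) *m v (tau k)).
  by move=> t; rewrite -hw -mulmxBr ec -scalemxAr nrm2Z.
rewrite /forgetting -/w (@big_nat_recr _ _ _ k 1%N) /=; last exact: ltnW.
have -> : I * dotv (v (tau 1%N)) wstar ^+ 2 * k%:R^-1 *
    \prod_(1 <= i < k) dotv (v (tau i)) (v (tau i.+1)) ^+ 2 *
    \sum_(1 <= j < k) (1 - dotv (v (tau j)) (v (tau k)) ^+ 2)
  = k%:R^-1 * \sum_(1 <= j < k)
      (c ^+ 2 * (I * (1 - dotv (v (tau j)) (v (tau k)) ^+ 2))).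
  by rewrite -!mulr_sumr c2; ring.
rewrite ler_wpM2l ?invr_ge0 ?ler0n //.
apply: le_trans (_ : _ <= \sum_(1 <= i < k) nrm2 (X (tau i) *m w k - y (tau i))) _.
  apply: ler_sum => i _; rewrite each; apply: ler_wpM2l; first exact: sqr_ge0.
  exact: term.
by rewrite lerDl nrm2_ge0.
Qed.
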